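(* Let $\Gamma:\mathbf{FinArb}^<_\star\to\mathbf{TArb}$ and $\mathrm{L}:\mathbf{TArb}\to\mathbf{FinArb}^<_\star$ be the functors defined below. Then $\Gamma$ is left adjoint to $\mathrm{L}$, i.e. $\Gamma\dashv\mathrm{L}$.
   Context: A (directed) graph is $(V,\to)$ with $\to\subseteq V\times V$; $N(u)$ is the set of outgoing edges of $u$. A pointed graph has a distinguished vertex $v_0$; connected means every vertex is reachable from $v_0$. A path is a finite sequence $v_1\to\cdots\to v_n$ of vertices joined by edges, with length $|\pi|$; co-initial paths share their source; $\pi\sqsubset\sigma$ means $\pi$ is a proper prefix of $\sigma$. A finite edge-ordered graph is a finite graph with a strict linear order $\triangleleft$ on each neighborhood. Lexicographic path order on co-initial paths: if $\pi\sqsubset\sigma$ then $\pi\prec\sigma$ (symmetrically); otherwise, with $\zeta$ the longest common prefix, $u$ its target and $v_1,v_2$ the next vertices, $\pi\prec\sigma$ iff $u\to v_1\triangleleft u\to v_2$. Shortlex: $\pi\prec^s\sigma$ iff $|\pi|<|\sigma|$ or ($|\pi|=|\sigma|$ and $\pi\prec\sigma$). A homomorphism of finite pointed edge-ordered graphs $h:G\to H$ is a vertex map with (i) $u\to v$ implies $h(u)\to h(v)$; (ii) the distinguished vertex of $G$ is the unique vertex mapped to the distinguished vertex of $H$; (iii) $u\to v_1\triangleleft u\to v_2$ implies $h(u)\to h(v_1)\triangleleft h(u)\to h(v_2)$. An arborescence is a pointed graph with a unique path $v_0\rightsquigarrow u$ for each vertex $u$. $\mathbf{FinArb}^<_\star$: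 finite edge-ordered arborescences with homomorphisms of pointed edge-ordered graphs. $\mathbf{TArb}$: objects are finite, pointed, connected, edge-ordered graphs $G$ for which there is a finite, connected, pointed, edge-ordered arborescence $T$ on the same vertices with the same distinguished point, such that the edge relation of $G$ is the transitive closure of that of $T$ and $u\to v_1\triangleleft u\to v_2$ in $G$ iff $(v_0\rightsquigarrow v_1)\prec^s(v_0\rightsquigarrow v_2)$, where $v_0\rightsquigarrow v$ is the unique path from $v_0$ to $v$ in $T$. In such $G$, for every $u,v$ with a path $u\rightsquigarrow v$ the longest such path is unique. Morphisms of $\mathbf{TArb}$ are homomorphisms of pointed edge-ordered graphs (i)–(iii) that also preserve longest paths: $h$ maps the longest path $u\rightsquigarrow v$ to the longest path $h(u)\rightsquigarrow h(v)$. $\Gamma(T)$: same vertices and distinguished point as $T$, edge relation the transitive closure of that of $T$, and $u\to v_1\triangleleft u\to v_2$ iff $(v_0\rightsquigarrow v_1)\prec^s(v_0\rightsquigarrow v_2)$ in $T$; $\Gamma(h)(v)=h(v)$. $\mathrm{L}(G)$: same vertices and distinguished point as $G$, containing an edge $u\to v$ iff it lies on the longest path $v_0\rightsquigarrow v$ in $G$, with neighborhood order inherited from $G$; $\mathrm{L}(h)(v)=h(v)$. *)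

(* Defs.v *)
From mathcomp Require Import all_boot.
Set Implicit Arguments. Unset Strict Implicit. Unset Printing Implicit Defensive.

(* A finite pointed edge-ordered graph structure on a finite vertex type V:
   an edge relation, a distinguished vertex, and for each vertex u a relation
   [eord u v1 v2] meaning  u -> v1  <|  u -> v2. *)
Record pegraph (V : finType) := PEGraph {
  edge : V -> V -> Prop;
  root : V;
  eord : V -> V -> V -> Prop }.

Section Defs.
Variable V : finType.

(* x :: p is a path (sequence of vertices joined by edges); its length is size p,
   its target is last x p. *)
Fixpoint ppath (e : V -> V -> Prop) (x : V) (p : seq V) : Prop :=
  match p with
  | [::] => True
  | y :: p' => e x y /\ ppath e y p'
  end.

Definition tclos (e : V -> V -> Prop) (x y : V) : Prop :=
  exists p, p <> [::] /\ ppath e x p /\ last x p = y.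

Definition edge_ordered (G : pegraph V) : Prop :=
  forall u,
    (forall v1 v2, eord G u v1 v2 -> edge G u v1 /\ edge G u v2) /\
    (forall v, ~ eord G u v v) /\
    (forall a b c, eord G u a b -> eord G u b c -> eord G u a c) /\
    (forall v1 v2, edge G u v1 -> edge G u v2 -> v1 <> v2 ->
       eord G u v1 v2 \/ eord G u v2 v1).

Definition connected (G : pegraph V) : Prop :=
  forall v, exists p, ppath (edge G) (root G) p /\ last (root G) p = v.

Definition arborescence (G : pegraph V) : Prop :=
  forall v, exists! p, ppath (edge G) (root G) p /\ last (root G) p = v.

Definition is_FinArb (T : pegraph V) : Prop := edge_ordered T /\ arborescence T.

Fixpoint lex_from (ord : V -> V -> V -> Prop) (u : V) (s t : seq V) : Prop :=
  match s, t with
  | [::], _ :: _ => True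
  | x :: s', y :: t' => if x == y then lex_from ord x s' t' else ord u x y
  | _, _ => False
  end.

Definition shortlex (ord : V -> V -> V -> Prop) (x : V) (p q : seq V) : Prop :=
  size p < size q \/ (size p = size q /\ lex_from ord x p q).

Definition tree_path (T : pegraph V) (v : V) (p : seq V) : Prop :=
  ppath (edge T) (root T) p /\ last (root T) p = v.

Definition tree_shortlex (T : pegraph V) (v1 v2 : V) : Prop :=
  exists p1 p2, tree_path T v1 p1 /\ tree_path T v2 p2 /\
                shortlex (eord T) (root T) p1 p2.

Definition Gamma (T : pegraph V) : pegraph V :=
  PEGraph (tclos (edge T)) (root T)
    (fun u v1 v2 => tclos (edge T) u v1 /\ tclos (edge T) u v2 /\
                    tree_shortlex T v1 v2).

Definition is_TArb (G : pegraph V) : Prop :=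
  edge_ordered G /\ connected G /\
  exists T : pegraph V,
    is_FinArb T /\ root T = root G /\
    (forall u v, edge G u v <-> tclos (edge T) u v) /\
    (forall u v1 v2, edge G u v1 -> edge G u v2 ->
       (eord G u v1 v2 <-> tree_shortlex T v1 v2)).

Definition is_longest (G : pegraph V) (u v : V) (p : seq V) : Prop :=
  ppath (edge G) u p /\ last u p = v /\
  forall q, ppath (edge G) u q -> last u q = v -> size q <= size p.

Definition Ledge (G : pegraph V) (u v : V) : Prop :=
  exists p, is_longest G (root G) v p /\ infix [:: u; v] (root G :: p).

Definition Lgraph (G : pegraph V) : pegraph V :=
  PEGraph (Ledge G) (root G)
    (fun u v1 v2 => Ledge G u v1 /\ Ledge G u v2 /\ eord G u v1 v2).

End Defs.

Definition pe_hom (V W : finType) (G : pegraph V) (H : pegraph W)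
  (h : V -> W) : Prop :=
  (forall u v, edge G u v -> edge H (h u) (h v)) /\
  (forall v, h v = root H <-> v = root G) /\
  (forall u v1 v2, eord G u v1 v2 -> eord H (h u) (h v1) (h v2)).

Definition FinArb_hom (V W : finType) (G : pegraph V) (H : pegraph W)
  (h : V -> W) : Prop := pe_hom G H h.

Definition TArb_hom (V W : finType) (G : pegraph V) (H : pegraph W)
  (h : V -> W) : Prop :=
  pe_hom G H h /\
  (forall u v p, is_longest G u v p -> is_longest H (h u) (h v) (map h p)).

Definition Gamma_mor (V W : finType) (h : V -> W) : V -> W := h.
Definition L_mor (V W : finType) (h : V -> W) : V -> W := h.

(* Main.v *)
Require Import Defs.
From mathcomp Require Import all_boot zify.
Import Defs.
Set Implicit Arguments. Unset Strict Implicit. Unset Printing Implicit Defensive.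

Section H.
Variable V : finType.
Implicit Types (e E : V -> V -> Prop) (p q s : seq V).

Lemma catK_l s p q : s ++ p = s ++ q -> p = q.
Proof. by elim: s => //= x s IH [] /IH. Qed.

Lemma ppath_cat e x p q : ppath e x (p ++ q) <-> ppath e x p /\ ppath e (last x p) q.
Proof.
elim: p x => [|y p IH] x /=; first by tauto.
move: (IH y); tauto.
Qed.

Lemma ppath_rcons e x p y : ppath e x (rcons p y) <-> ppath e x p /\ e (last x p) y.
Proof. rewrite -cats1; move: (ppath_cat e x p [:: y]) => /=; tauto. Qed.

Lemma ppath_mono e1 e2 x p : (forall a b, e1 a b -> e2 a b) -> ppath e1 x p -> ppath e2 x p.
Proof. move=> H; elim: p x => [|y p IH] x //= [h1 h2]; split; auto. Qed.

Lemma ppath_ext e1 e2 x p : (forall a b, e1 a b <-> e2 a b) -> ppath e1 x p <-> ppath e2 x p.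
Proof. move=> H; split; apply: ppath_mono => a b; apply H. Qed.

Definition arb E r := forall v, exists! p, ppath E r p /\ last r p = v.

Lemma arb_ext e1 e2 r : (forall a b, e1 a b <-> e2 a b) -> arb e1 r -> arb e2 r.
Proof.
move=> H A v; case: (A v) => p [[Hp Hl] Hu]; exists p; split.
  by split=> //; apply/(ppath_ext _ _ H).
by move=> q [Hq Hlq]; apply: Hu; split=> //; apply/(ppath_ext _ _ H).
Qed.

Lemma arb_uniq E r p q : arb E r -> ppath E r p -> ppath E r q -> last r p = last r q -> p = q.
Proof.
move=> A Hp Hq Hl; case: (A (last r p)) => s [_ Hu].
by rewrite -(Hu p) // (Hu q).
Qed.

Lemma arb_from_uniq E r u p q : arb E r -> ppath E u p -> ppath E u q -> last u p = last u q -> p = q.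
Proof.
move=> A Hp Hq Hl; case: (A u) => s [[Hs Hls] _].
apply: (@catK_l s); apply: (arb_uniq A).
- by apply/ppath_cat; rewrite Hls.
- by apply/ppath_cat; rewrite Hls.
- by rewrite !last_cat Hls.
Qed.

Lemma tclos_step E x y : E x y -> tclos E x y.
Proof. by move=> h; exists [:: y]. Qed.

Lemma expand E u p : ppath (tclos E) u p -> exists p', ppath E u p' /\ last u p' = last u p /\
   size p <= size p' /\ (size p' <= size p -> p' = p).
Proof.
elim: p u => [|y p IH] u /=.
  by move=> _; exists [::].
move=> [[r [rn [Hr Hlr]]] Hp]; case: (IH y Hp) => p1 [H1 [H2 [H3 H4]]].
exists (r ++ p1); split; first by apply/ppath_cat; rewrite Hlr.
split; first by rewrite last_cat Hlr.
rewrite size_cat; case: r rn Hr Hlr => [|z r] // _ Hr Hlr /=; split.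
  lia.
rewrite addSn ltnS => Hle.
have Hr0 : r = [::].
  case: r Hle {Hr Hlr} => //= a r Hle; exfalso; lia.
move: Hle Hlr; rewrite Hr0 /= add0n => Hle <-; by rewrite H4.
Qed.

Definition longest e u v p := ppath e u p /\ last u p = v /\
  forall q, ppath e u q -> last u q = v -> size q <= size p.

Lemma longest_tree E e r : arb E r -> (forall x y, e x y <-> tclos E x y) ->
  forall u v p, longest e u v p <-> ppath E u p /\ last u p = v.
Proof.
move=> A He u v p; have Ee : forall a b, E a b -> e a b by move=> a b /tclos_step /He.
have eT : forall a b, e a b -> tclos E a b by move=> a b /He.
split.
  move=> [Hp [Hl Hm]]; case: (expand (ppath_mono eT Hp)) => p' [H1 [H2 [H3 H4]]].
  have : p' = p by apply: H4; apply: Hm; [exact: (ppath_mono Ee H1)|rewrite H2].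
  by move=> <-; rewrite H2.
move=> [Hp Hl]; split; first exact: (ppath_mono Ee Hp).
split=> // q Hq Hlq; case: (expand (ppath_mono eT Hq)) => q' [H1 [H2 [H3 H4]]].
have -> : p = q' by apply: (arb_from_uniq A Hp H1); rewrite H2 Hl Hlq.
exact H3.
Qed.

Lemma ppath_infix e x p a b : ppath e x p -> infix [:: a; b] (x :: p) -> e a b.
Proof.
move=> Hp /infixP [s1 [s3 E]]; elim: s1 x p Hp E => [|y s1 IH] x p Hp /= E.
  by case: E => ??; subst; case: Hp.
case: E => _; case: p Hp => [|z p] /=.
  by case: s1 {IH}.
by move=> [_ Hp] E; apply: (IH z p Hp).
Qed.

Lemma infix_end (x : V) p (b : V) : infix [:: last x p; b] (rcons (x :: p) b).
Proof.
rewrite (lastI x p) -!cats1 -catA /=; exact: suffix_infix.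
Qed.

Variable ord : V -> V -> V -> Prop.

Lemma lex_irr x p : ~ lex_from ord x p p.
Proof. by elim: p x => [|y p IH] x //=; rewrite eqxx. Qed.

Lemma lex_trans x p q s : (forall u a b c, ord u a b -> ord u b c -> ord u a c) ->
  (forall u a, ~ ord u a a) -> lex_from ord x p q -> lex_from ord x q s -> lex_from ord x p s.
Proof.
move=> Tr Ir; elim: p x q s => [|a p IH] x [|b q] [|c s] //=.
case: (eqVneq a b) => [ab|ab]; case: (eqVneq a c) => [ac|ac].
- subst; rewrite eqxx; apply: IH.
- subst; by rewrite (negbTE ac).
- subst; rewrite eq_sym (negbTE ab) => h1 h2; case: (Ir _ _ (Tr _ _ _ _ h1 h2)).
- case: (eqVneq b c) => [bc|bc]; first by subst.
  exact: Tr.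
Qed.

Lemma lex_total E x p q : (forall u a b, E u a -> E u b -> a <> b -> ord u a b \/ ord u b a) ->
  ppath E x p -> ppath E x q -> size p = size q -> p <> q ->
  lex_from ord x p q \/ lex_from ord x q p.
Proof.
move=> Tot; elim: p x q => [|a p IH] x [|b q] //= [Ea Hp] [Eb Hq] [Hs] Hne.
case: (eqVneq a b) => [ab|ab].
  subst b; apply: IH => //; by move=> h; apply: Hne; rewrite h.
by apply: Tot => //; apply/eqP.
Qed.

Lemma lex_rcons x p a b : a <> b -> ord (last x p) a b -> lex_from ord x (rcons p a) (rcons p b).
Proof.
move=> ab; elim: p x => [|y p IH] x /=; last by rewrite eqxx; apply: IH.
by have /negbTE -> : a != b by apply/eqP.
Qed.

Lemma lex_rcons_inv x p a b : lex_from ord x (rcons p a) (rcons p b) -> ord (last x p) a b.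
Proof.
elim: p x => [|y p IH] x /=; last by rewrite eqxx; apply: IH.
by case: eqP.
Qed.

End H.

Lemma lex_map (V W : finType) (ord : V -> V -> V -> Prop) (ord' : W -> W -> W -> Prop) (f : V -> W) x p q :
  (forall u a b, ord u a b -> ord' (f u) (f a) (f b)) -> (forall u a, ~ ord' u a a) ->
  lex_from ord x p q -> lex_from ord' (f x) (map f p) (map f q).
Proof.
move=> Hf Ir; elim: p x q => [|a p IH] x [|b q] //=.
case: (eqVneq a b) => [<-|ab]; first by rewrite eqxx; apply: IH.
move=> /Hf h; have /negbTE -> : f a != f b.
  by apply/eqP => e; apply: (Ir (f x) (f a)); rewrite {2}e.
exact h.
Qed.

Lemma ppath_map (V W : finType) (e : V -> V -> Prop) (e' : W -> W -> Prop) (f : V -> W) x p :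
  (forall a b, e a b -> e' (f a) (f b)) -> ppath e x p -> ppath e' (f x) (map f p).
Proof. move=> H; elim: p x => [|y p IH] x //= [h1 h2]; split; auto. Qed.

Lemma tclos_map (V W : finType) (e : V -> V -> Prop) (e' : W -> W -> Prop) (f : V -> W) x y :
  (forall a b, e a b -> e' (f a) (f b)) -> tclos e x y -> tclos e' (f x) (f y).
Proof.
move=> H [p [pn [Hp Hl]]]; exists (map f p); split; first by case: p pn {Hp Hl}.
by split; [apply: (ppath_map H Hp)|rewrite last_map Hl].
Qed.

Section G.
Variable V : finType.
Implicit Types (T G : pegraph V) (p q : seq V).

Lemma tsl_irr T v : is_FinArb T -> ~ tree_shortlex T v v.
Proof.
move=> [_ A] [p1 [p2 [[H1 L1] [[H2 L2] S]]]].
have e : p1 = p2 by apply: (arb_uniq A H1 H2); rewrite L1 L2.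
subst; case: S => [|[_]]; [by rewrite ltnn | exact: lex_irr].
Qed.

Lemma tsl_trans T a b c : is_FinArb T -> tree_shortlex T a b -> tree_shortlex T b c -> tree_shortlex T a c.
Proof.
move=> [O A] [p1 [p2 [[H1 L1] [[H2 L2] S1]]]] [p2' [p3 [[H2' L2'] [[H3 L3] S2]]]].
have e : p2' = p2 by apply: (arb_uniq A H2' H2); rewrite L2 L2'.
subst; exists p1, p3; do 2 split => //.
case: S1 => [s1|[s1 l1]]; case: S2 => [s2|[s2 l2]].
- left; exact: ltn_trans s1 s2.
- by left; rewrite -s2.
- by left; rewrite s1.
- right; split; first by rewrite s1.
  apply: (lex_trans _ _ l1 l2).
  + by move=> u x y z; case: (O u) => _ [_ [Tr _]]; apply: Tr.
  + by move=> u x; case: (O u) => _ [Ir _]; apply: Ir.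
Qed.

Lemma tsl_total T a b : is_FinArb T -> a <> b -> tree_shortlex T a b \/ tree_shortlex T b a.
Proof.
move=> [O A] ab; case: (A a) => pa [[Ha La] _]; case: (A b) => pb [[Hb Lb] _].
case: (ltngtP (size pa) (size pb)) => s.
- by left; exists pa, pb; do 2 split => //; left.
- by right; exists pb, pa; do 2 split => //; left.
have ne : pa <> pb by move=> e; apply: ab; rewrite -La -Lb e.
have Tot : forall u x y, edge T u x -> edge T u y -> x <> y -> eord T u x y \/ eord T u y x.
  by move=> u x y; case: (O u) => _ [_ [_ Tot]]; apply: Tot.
case: (lex_total Tot Ha Hb s ne) => l.
- by left; exists pa, pb; do 2 split => //; right.
- by right; exists pb, pa; do 2 split => //; right.
Qed.

Lemma tsl_sib T u a b : is_FinArb T -> edge T u a -> edge T u b ->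
  (tree_shortlex T a b <-> eord T u a b).
Proof.
move=> [O A] ea eb; case: (A u) => s [[Hs Ls] _].
have Pa : tree_path T a (rcons s a) by split; [apply/ppath_rcons; rewrite Ls | rewrite last_rcons].
have Pb : tree_path T b (rcons s b) by split; [apply/ppath_rcons; rewrite Ls | rewrite last_rcons].
split.
  move=> [p1 [p2 [[H1 L1] [[H2 L2] S]]]].
  have e1 : p1 = rcons s a by apply: (arb_uniq A H1 Pa.1); rewrite L1 Pa.2.
  have e2 : p2 = rcons s b by apply: (arb_uniq A H2 Pb.1); rewrite L2 Pb.2.
  rewrite e1 e2 in S; case: S => [|[_ l]]; first by rewrite !size_rcons ltnn.
  by rewrite -Ls; apply: lex_rcons_inv l.
move=> o; exists (rcons s a), (rcons s b); do 2 split => //.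
right; split; first by rewrite !size_rcons.
apply: lex_rcons; last by rewrite Ls.
by move=> e; rewrite e in o; case: (O u) => _ [Ir _]; apply: (Ir b).
Qed.

Lemma Gamma_longest T u v p : is_FinArb T ->
  (is_longest (Gamma T) u v p <-> ppath (edge T) u p /\ last u p = v).
Proof.
move=> [_ A]; exact: (longest_tree (e := tclos (edge T)) A (fun x y => iff_refl _) u v p).
Qed.

Section TA.
Variables (G TG : pegraph V).
Hypotheses (F : is_FinArb TG) (R : root TG = root G)
  (E : forall u v, edge G u v <-> tclos (edge TG) u v).

Lemma TArb_longest u v p : is_longest G u v p <-> ppath (edge TG) u p /\ last u p = v.
Proof. case: F => _ A; exact: (longest_tree (e := edge G) A E u v p). Qed.

Lemma TArb_Ledge u v : Ledge G u v <-> edge TG u v.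
Proof.
split.
  move=> [p [/TArb_longest [Hp _] I]]; exact: (ppath_infix Hp I).
move=> e; case: F => _ A; case: (A u) => s [[Hs Ls] _].
exists (rcons s v); split.
  apply/TArb_longest; rewrite -R last_rcons; split => //.
  by apply/ppath_rcons; rewrite Ls.
rewrite -R -rcons_cons; move: (infix_end (root TG) s v); by rewrite Ls.
Qed.

Lemma TArb_Ledge_edge u v : Ledge G u v -> edge G u v.
Proof. by move=> /TArb_Ledge /tclos_step /E. Qed.

End TA.
End G.

Lemma hom_tsl (V W : finType) (T : pegraph V) (T' : pegraph W) h v1 v2 :
  pe_hom T T' h -> (forall u a, ~ eord T' u a a) ->
  tree_shortlex T v1 v2 -> tree_shortlex T' (h v1) (h v2).
Proof.
move=> [He [Hr Ho]] Ir [p1 [p2 [[H1 L1] [[H2 L2] S]]]].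
have hr : h (root T) = root T' by apply/Hr.
exists (map h p1), (map h p2); split; last split.
- by split; [rewrite -hr; apply: (ppath_map He H1) | rewrite -hr last_map L1].
- by split; [rewrite -hr; apply: (ppath_map He H2) | rewrite -hr last_map L2].
rewrite /shortlex !size_map -hr; case: S => [s|[s l]]; [by left | right; split => //].
exact: lex_map Ho Ir l.
Qed.

Lemma Gamma_TArb (V : finType) (T : pegraph V) : is_FinArb T -> is_TArb (Gamma T).
Proof.
move=> FT; have [O A] := FT; split; last split.
- move=> u /=; split; [by move=> v1 v2 [h1 [h2 _]] | split; [|split]].
  + by move=> v [_ [_ t]]; apply: (tsl_irr FT t).
  + move=> a b c [h1 [_ t1]] [_ [h3 t2]]; split; [|split] => //; exact: (tsl_trans FT t1 t2).
  + move=> v1 v2 h1 h2 ne; case: (tsl_total FT ne) => t; [left|right]; by split; [|split].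
- move=> v /=; case: (A v) => p [[Hp Lp] _]; exists p; split => //.
  exact: (ppath_mono (@tclos_step _ _) Hp).
- exists T; split => //; split => //; split => // u v1 v2 /= h1 h2; tauto.
Qed.

Lemma Gamma_hom (V W : finType) (T : pegraph V) (T' : pegraph W) h :
  is_FinArb T -> is_FinArb T' -> FinArb_hom T T' h -> TArb_hom (Gamma T) (Gamma T') (Gamma_mor h).
Proof.
move=> FT FT' H; have [He [Hr Ho]] := H.
have Ir : forall u a, ~ eord T' u a a by move=> u a; case: FT' => O _; case: (O u) => _ [Ir _]; apply Ir.
rewrite /Gamma_mor; split; [split; [|split]|].
- move=> u v /=; exact: tclos_map He.
- by move=> v /=; apply Hr.
- move=> u v1 v2 /= [h1 [h2 t]]; split; [exact: tclos_map He h1|split; [exact: tclos_map He h2|]].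
  exact: hom_tsl H Ir t.
- move=> u v p /(Gamma_longest _ _ _ FT) [Hp Lp]; apply/(Gamma_longest _ _ _ FT').
  by split; [exact: ppath_map He Hp | rewrite last_map Lp].
Qed.

Lemma L_FinArb (V : finType) (G : pegraph V) : is_TArb G -> is_FinArb (Lgraph G).
Proof.
move=> [O [_ [TG [FTG [R [E Eo]]]]]]; split.
- move=> u /=; case: (O u) => _ [Ir [Tr Tot]]; split; [by move=> v1 v2 [h1 [h2 _]] | split; [|split]].
  + by move=> v [_ [_ /Ir]].
  + move=> a b c [h1 [_ t1]] [_ [h3 t2]]; split; [|split] => //; exact: Tr t1 t2.
  + move=> v1 v2 h1 h2 ne.
    have e1 := TArb_Ledge_edge FTG R E h1; have e2 := TArb_Ledge_edge FTG R E h2.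
    case: (Tot _ _ e1 e2 ne) => t; [left|right]; (split; [exact h1 || exact h2|split; [exact h1 || exact h2|exact t]]).
- rewrite /arborescence /=; rewrite -R; have [_ A] := FTG.
  apply: (arb_ext _ A) => a b; rewrite (TArb_Ledge FTG R E); tauto.
Qed.

Lemma infix_map' (V W : finType) (f : V -> W) (s t : seq V) : infix s t -> infix (map f s) (map f t).
Proof. by move=> /infixP [a [b ->]]; apply/infixP; exists (map f a), (map f b); rewrite !map_cat. Qed.

Lemma L_hom (V W : finType) (G : pegraph V) (G' : pegraph W) h :
  is_TArb G -> is_TArb G' -> TArb_hom G G' h -> FinArb_hom (Lgraph G) (Lgraph G') (L_mor h).
Proof.
move=> _ _ [[He [Hr Ho]] Hl]; rewrite /L_mor.
have hr : h (root G) = root G' by apply/Hr.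
have HL : forall u v, Ledge G u v -> Ledge G' (h u) (h v).
  move=> u v [p [Lp I]]; exists (map h p); split; first by rewrite -hr; exact: Hl.
  by rewrite -hr -map_cons; exact: (infix_map' h I).
split; [exact: HL | split; [by move=> v /=; apply Hr|]].
move=> u v1 v2 /= [h1 [h2 o]]; split; [exact: HL|split; [exact: HL|exact: Ho]].
Qed.

Lemma adj_a (V W : finType) (T : pegraph V) (G : pegraph W) f :
  is_FinArb T -> is_TArb G -> TArb_hom (Gamma T) G f -> FinArb_hom T (Lgraph G) f.
Proof.
move=> FT _ [[He [Hr Ho]] Hl]; have [O A] := FT.
have hr : f (root T) = root G by apply/Hr.
have HL : forall u v, edge T u v -> Ledge G (f u) (f v).
  move=> u v e; case: (A u) => s [[Hs Ls] _].
  exists (map f (rcons s v)); split.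
    rewrite -hr; apply: Hl; apply/(Gamma_longest _ _ _ FT); rewrite last_rcons; split => //.
    by apply/ppath_rcons; rewrite Ls.
  have I := infix_map' f (infix_end (root T) s v); rewrite Ls /= in I; by rewrite -hr.
split; [exact: HL | split; [by move=> v; apply: Hr|]].
move=> u v1 v2 o; have [ev1 ev2] : edge T u v1 /\ edge T u v2 by case: (O u) => H _; apply: H.
split; [exact: HL|split; [exact: HL|]].
apply: Ho => /=; split; [exact: tclos_step|split; [exact: tclos_step|]].
by apply/(tsl_sib FT ev1 ev2).
Qed.

Lemma adj_b (V W : finType) (T : pegraph V) (G : pegraph W) g :
  is_FinArb T -> is_TArb G -> FinArb_hom T (Lgraph G) g -> TArb_hom (Gamma T) G g.
Proof.
move=> FT [OG [_ [TG [FTG [R [E Eo]]]]]] [He [Hr Ho]].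
have HeT : forall u v, edge T u v -> edge TG (g u) (g v).
  by move=> u v /He /(TArb_Ledge FTG R E).
have Hed : forall u v, tclos (edge T) u v -> edge G (g u) (g v).
  by move=> u v t; apply/E; exact: tclos_map HeT t.
have IrTG : forall u a, ~ eord TG u a a.
  by move=> u a; case: FTG => O _; case: (O u) => _ [Ir _]; apply Ir.
have HpT : pe_hom T TG g.
  split; [exact: HeT|split; [by move=> v; rewrite R; apply: Hr|]].
  move=> u a b /Ho /= [l1 [l2 o]].
  have ea := TArb_Ledge_edge FTG R E l1; have eb := TArb_Ledge_edge FTG R E l2.
  move/(TArb_Ledge FTG R E): l1 => l1; move/(TArb_Ledge FTG R E): l2 => l2.
  apply/(tsl_sib FTG l1 l2); by apply/(Eo _ _ _ ea eb).
split; [split; [exact: Hed|split; [by move=> v; apply: Hr|]]|].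
  move=> u v1 v2 /= [h1 [h2 t]]; apply/(Eo _ _ _ (Hed _ _ h1) (Hed _ _ h2)).
  exact: hom_tsl HpT IrTG t.
move=> u v p /(Gamma_longest _ _ _ FT) [Hp Lp]; apply/(TArb_longest FTG E).
by split; [exact: ppath_map HeT Hp | rewrite last_map Lp].
Qed.

Theorem theorem8p6 :
  (* Gamma : FinArb^<_* -> TArb is a functor *)
  (forall (V : finType) (T : pegraph V), is_FinArb T -> is_TArb (Gamma T)) /\
  (forall (V W : finType) (T : pegraph V) (T' : pegraph W) (h : V -> W),
     is_FinArb T -> is_FinArb T' -> FinArb_hom T T' h ->
     TArb_hom (Gamma T) (Gamma T') (Gamma_mor h)) /\
  (* L : TArb -> FinArb^<_* is a functor *)
  (forall (V : finType) (G : pegraph V), is_TArb G -> is_FinArb (Lgraph G)) /\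
  (forall (V W : finType) (G : pegraph V) (G' : pegraph W) (h : V -> W),
     is_TArb G -> is_TArb G' -> TArb_hom G G' h ->
     FinArb_hom (Lgraph G) (Lgraph G') (L_mor h)) /\
  (* Gamma -| L : natural bijection TArb(Gamma T, G) ~ FinArb(T, L G) *)
  exists (phi psi : forall (V W : finType), pegraph V -> pegraph W ->
                      (V -> W) -> (V -> W)),
    (forall (V W : finType) (T : pegraph V) (G : pegraph W),
       is_FinArb T -> is_TArb G ->
       (forall f, TArb_hom (Gamma T) G f -> FinArb_hom T (Lgraph G) (phi V W T G f)) /\
       (forall g, FinArb_hom T (Lgraph G) g -> TArb_hom (Gamma T) G (psi V W T G g)) /\
       (forall f, TArb_hom (Gamma T) G f -> psi V W T G (phi V W T G f) =1 f) /\
       (forall g, FinArb_hom T (Lgraph G) g -> phi V W T G (psi V W T G g) =1 g)) /\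
    (forall (V V' W W' : finType) (T : pegraph V) (T' : pegraph V')
            (G : pegraph W) (G' : pegraph W')
            (a : V' -> V) (b : W -> W') (f : V -> W),
       is_FinArb T -> is_FinArb T' -> is_TArb G -> is_TArb G' ->
       FinArb_hom T' T a -> TArb_hom G G' b -> TArb_hom (Gamma T) G f ->
       phi V' W' T' G' (b \o f \o Gamma_mor a)
         =1 L_mor b \o phi V W T G f \o a).
Proof.
split; first exact: Gamma_TArb.
split; first exact: Gamma_hom.
split; first exact: L_FinArb.
split; first exact: L_hom.
exists (fun V W _ _ f => f), (fun V W _ _ f => f); split.
  move=> V W T G FT TG; split; first by move=> f; exact: adj_a.
  split; first by move=> g; exact: adj_b.
  by split.
by [].
Qed.
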